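(* Fix a test set $\mathbf{x}=\{x_1,\dots,x_n\}$ of size $n$ and a bounded performance metric $\Psi$. Let $\eta(x_i)=\mathbb{P}(Y=1\mid x_i)$ and let $\hat\eta(x_i)$ be estimates (computed from $m$ training samples) satisfying $\hat\eta(x_i)\xrightarrow{p}\eta(x_i)$ as $m\to\infty$. Let $\hat{\mathbb{P}}(\mathbf{y}\mid\mathbf{x})=\prod_{i=1}^n\hat\eta(x_i)^{y_i}(1-\hat\eta(x_i))^{1-y_i}$ and $\mathbb{P}(\mathbf{y}\mid\mathbf{x})=\prod_{i=1}^n\eta(x_i)^{y_i}(1-\eta(x_i))^{1-y_i}$. Let $\mathbf{s}^*\in\arg\max_{\mathbf{s}\in\{0,1\}^n}U_\Psi(\mathbf{s};\mathbb{P})$ and $\hat{\mathbf{s}}\in\arg\max_{\mathbf{s}\in\{0,1\}^n}U_\Psi(\mathbf{s};\hat{\mathbb{P}})$. Then \[U_\Psi(\mathbf{s}^*;\mathbb{P})-U_\Psi(\hat{\mathbf{s}};\mathbb{P})\xrightarrow{p}0.\]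
   Context: Labels are binary. A metric $\Psi$ is a function of the empirical confusion matrix (entries $\frac1n\sum_is_iy_i$, $\frac1n\sum_i(1-s_i)(1-y_i)$, $\frac1n\sum_is_i(1-y_i)$, $\frac1n\sum_i(1-s_i)y_i$) of predictions $\mathbf{s}\in\{0,1\}^n$ against labels $\mathbf{y}\in\{0,1\}^n$, written $\Psi(\mathbf{s},\mathbf{y})$. For a distribution $Q$ on $\{0,1\}^n$, $U_\Psi(\mathbf{s};Q)=\sum_{\mathbf{y}\in\{0,1\}^n}Q(\mathbf{y})\Psi(\mathbf{s},\mathbf{y})$. *)

(* Defs.v *)
From HB Require Import structures.
From mathcomp Require Import all_boot all_order all_algebra.
From mathcomp Require Import all_classical all_reals all_analysis.
Set Implicit Arguments. Unset Strict Implicit. Unset Printing Implicit Defensive.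
Import Order.TTheory GRing.Theory Num.Theory.
Local Open Scope ring_scope.
Local Open Scope classical_set_scope.

(* Label / prediction vectors in {0,1}^n, true = 1. *)
Notation labels n := {ffun 'I_n -> bool}.

Section Metric.
Variables (R : realType) (n : nat).

Definition conf_tp (s y : labels n) : R := n%:R^-1 * \sum_(i < n) ((s i : nat) * (y i : nat))%:R.
Definition conf_tn (s y : labels n) : R := n%:R^-1 * \sum_(i < n) ((1 - s i) * (1 - y i))%:R.
Definition conf_fp (s y : labels n) : R := n%:R^-1 * \sum_(i < n) ((s i : nat) * (1 - y i))%:R.
Definition conf_fn (s y : labels n) : R := n%:R^-1 * \sum_(i < n) ((1 - s i) * (y i : nat))%:R.

Definition metric (Psi : R -> R -> R -> R -> R) (s y : labels n) : R :=
  Psi (conf_tp s y) (conf_tn s y) (conf_fp s y) (conf_fn s y).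

Definition prodBern (e : 'I_n -> R) (y : labels n) : R :=
  \prod_(i < n) (e i ^+ (y i : nat) * (1 - e i) ^+ (1 - y i)).

Definition Uexp (Psi : R -> R -> R -> R -> R) (Q : labels n -> R) (s : labels n) : R :=
  \sum_(y : labels n) Q y * metric Psi s y.

Definition is_argmax (f : labels n -> R) (s : labels n) : Prop :=
  forall s' : labels n, f s' <= f s.

End Metric.

Definition cvg_in_prob {d} {Omega : measurableType d} {R : realType}
  (P : probability Omega R) (X : nat -> Omega -> R) (Y : Omega -> R) : Prop :=
  forall eps : R, 0 < eps ->
    (fun m => P [set w | eps < `|X m w - Y w|]) @ \oo --> 0%E.

(* Main.v *)
Require Import Defs.
From HB Require Import structures.
From mathcomp Require Import all_boot all_order all_algebra.
From mathcomp Require Import all_classical all_reals all_analysis.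
From mathcomp Require Import ring lra.
Import Order.TTheory GRing.Theory Num.Theory.
Local Open Scope ring_scope.
Local Open Scope classical_set_scope.

Lemma prod_norm_le1 (R : realDomainType) n (b : 'I_n -> R) :
  (forall i, `|b i| <= 1) -> `|\prod_(i < n) b i| <= 1.
Proof.
elim: n b => [|n IH] b hb; first by rewrite big_ord0 normr1.
rewrite big_ord_recr /= normrM mulr_ile1 //; exact: IH.
Qed.

Lemma prod_diff (R : realDomainType) n (a b : 'I_n -> R) :
  (forall i, `|a i| <= 1) -> (forall i, `|b i| <= 1) ->
  `|\prod_(i < n) a i - \prod_(i < n) b i| <= \sum_(i < n) `|a i - b i|.
Proof.
elim: n a b => [|n IH] a b ha hb; first by rewrite !big_ord0 subrr normr0.
rewrite !big_ord_recr /=.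
set A := \prod_(i < n) a (widen_ord _ i). set B := \prod_(i < n) b (widen_ord _ i).
have -> : A * a ord_max - B * b ord_max = (A - B) * a ord_max + B * (a ord_max - b ord_max) by ring.
apply: (le_trans (ler_normD _ _)); apply: lerD.
  rewrite normrM; apply: (le_trans (ler_wpM2l (normr_ge0 _) (ha _))).
  by rewrite mulr1; apply: IH.
have hB : `|B| <= 1 by apply: prod_norm_le1 => i; apply: hb.
rewrite normrM; apply: (le_trans (ler_wpM2r (normr_ge0 _) hB)).
by rewrite mul1r.
Qed.

Lemma bern_fac (R : realDomainType) (a b : R) (c : bool) :
  0 <= a <= 1 -> 0 <= b <= 1 ->
  `|a ^+ c * (1 - a) ^+ (1 - c)| <= 1 /\
  `|a ^+ c * (1 - a) ^+ (1 - c) - b ^+ c * (1 - b) ^+ (1 - c)| <= `|a - b|.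
Proof.
move=> /andP[a0 a1] /andP[b0 b1]; case: c => /=; rewrite ?expr1 ?expr0 ?mulr1 ?mul1r.
  by split => //; rewrite ger0_norm.
split; first by rewrite ger0_norm ?subr_ge0 // lerBlDr lerDl.
have -> : 1 - a - (1 - b) = b - a by ring.
by rewrite distrC.
Qed.

Lemma U_diff (R : realType) n (Psi : R -> R -> R -> R -> R) (M : R)
  (hM : forall s y : labels n, `|metric Psi s y| <= M)
  (e e' : 'I_n -> R) (he : forall i, 0 <= e i <= 1) (he' : forall i, 0 <= e' i <= 1)
  (s : labels n) :
  `|Uexp Psi (prodBern e) s - Uexp Psi (prodBern e') s|
    <= ((\sum_(i < n) `|e i - e' i|) * M) *+ #|{: labels n}|.
Proof.
rewrite /Uexp -sumrB -sumr_const.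
apply: (le_trans (ler_norm_sum _ _ _)); apply: ler_sum => y _.
rewrite -mulrBl normrM; apply: ler_pM; [exact: normr_ge0|exact: normr_ge0| |exact: hM].
rewrite /prodBern.
apply: (le_trans (@prod_diff _ n (fun i => e i ^+ y i * (1 - e i) ^+ (1 - y i)) (fun i => e' i ^+ y i * (1 - e' i) ^+ (1 - y i)) _ _)).
- by move=> i; case: (@bern_fac _ _ _ (y i) (he i) (he' i)).
- by move=> i; case: (@bern_fac _ _ _ (y i) (he' i) (he i)).
- by apply: ler_sum => i _; case: (@bern_fac _ _ _ (y i) (he i) (he' i)).
Qed.

Lemma gap_bound (R : realType) n (Psi : R -> R -> R -> R -> R) (M : R)
  (hM : forall s y : labels n, `|metric Psi s y| <= M)
  (e e' : 'I_n -> R) (he : forall i, 0 <= e i <= 1) (he' : forall i, 0 <= e' i <= 1)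
  (ss sh : labels n) (sso : is_argmax (Uexp Psi (prodBern e)) ss)
  (sho : is_argmax (Uexp Psi (prodBern e')) sh) :
  `|Uexp Psi (prodBern e) ss - Uexp Psi (prodBern e) sh - 0|
    <= (\sum_(i < n) `|e' i - e i|) * ((M *+ #|{: labels n}|) * 2).
Proof.
rewrite subr0 ger0_norm ?subr_ge0; last exact: sso.
set U := Uexp Psi (prodBern e). set U' := Uexp Psi (prodBern e').
have h1 := @U_diff _ _ _ _ hM _ _ he he' ss. have h2 := @U_diff _ _ _ _ hM _ _ he' he sh.
have h3 := sho ss.
have eS : \sum_(i < n) `|e i - e' i| = \sum_(i < n) `|e' i - e i|.
  by apply: eq_bigr => i _; rewrite distrC.
rewrite eS in h1.
have := ler_norm (U ss - U' ss). have := ler_norm (U' sh - U sh).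
rewrite -/U -/U' in h1 h2 h3 *.
rewrite -mulrnAr in h1 h2. rewrite mulrA mulr2n.
set X := (\sum_(i < n) `|e' i - e i|) * (M *+ #|{: labels n}|) in h1 h2 *.
move=> a b. lra.
Qed.

Theorem theorem2 (R : realType) (n : nat)
  (Psi : R -> R -> R -> R -> R)
  (Psi_bounded : exists M : R, forall s y : labels n, `|metric Psi s y| <= M)
  (eta : 'I_n -> R) (eta01 : forall i, 0 <= eta i <= 1)
  (d : measure_display) (Omega : measurableType d) (P : probability Omega R)
  (etahat : nat -> 'I_n -> Omega -> R)
  (etahat_meas : forall m i, measurable_fun setT (etahat m i))
  (etahat01 : forall m i w, 0 <= etahat m i w <= 1)
  (etahat_cvg : forall i, cvg_in_prob P (fun m => etahat m i) (fun _ => eta i))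
  (sstar : labels n) (sstar_opt : is_argmax (Uexp Psi (prodBern eta)) sstar)
  (shat : nat -> Omega -> labels n)
  (shat_opt : forall m w, is_argmax (Uexp Psi (prodBern (fun i => etahat m i w))) (shat m w))
  (shat_meas : forall m (s : labels n), measurable [set w | shat m w = s]) :
  cvg_in_prob P
    (fun m w => Uexp Psi (prodBern eta) sstar - Uexp Psi (prodBern eta) (shat m w))
    (fun _ => 0).
Proof.
move=> eps eps0.
have [M hM] := Psi_bounded.
have M0 : 0 <= M := le_trans (normr_ge0 _) (hM sstar sstar).
set C := (M *+ #|{: labels n}|) * 2.
have C0 : 0 <= C by rewrite /C mulr_ge0 // mulrn_wge0.
set delta := eps / (C * n%:R + 1).
have Cn0 : 0 < C * n%:R + 1 by rewrite ltr_wpDl // mulr_ge0.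
have delta0 : 0 < delta by rewrite /delta divr_gt0.
pose B m i := [set w | delta < `|etahat m i w - eta i|].
have Bmeas m i : measurable (B m i).
  have mf : measurable_fun setT (fun w => `|etahat m i w - eta i|).
    apply: measurableT_comp; first exact: measurable_realfun.normr_measurable.
    by apply: measurable_realfun.measurable_funB => //; exact: measurable_cst.
  have := mf measurableT _ (measurable_itv `]delta, +oo[%O); rewrite setTI.
  congr measurable; apply/seteqP; split => w /=; rewrite in_itv /= andbT //.
pose A m := [set w | eps < `|Uexp Psi (prodBern eta) sstar - Uexp Psi (prodBern eta) (shat m w) - 0|].
have Ameas m : measurable (A m).
  have -> : A m = \bigcup_(s in [set s | eps < `|Uexp Psi (prodBern eta) sstar - Uexp Psi (prodBern eta) s - 0|]) [set w | shat m w = s].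
    apply/seteqP; split => w /=.
      by move=> h; exists (shat m w).
    by move=> [s hs hw]; rewrite /A /= hw.
  apply: fin_bigcup_measurable; first exact: finite_finset.
  by move=> s _; exact: shat_meas.
pose F m (k : nat) := if (insub k : option 'I_n) is Some i then B m i else set0.
have FB m (i : 'I_n) : F m i = B m i by rewrite /F valK.
have bound m : (P (A m) <= \sum_(i < n) P (B m i))%E.
  rewrite -(eq_bigr _ (fun i _ => congr1 P (FB m i))).
  apply: content_subadditive.
  - move=> k _; rewrite /F; case: (insub k) => [i|] //; exact: Bmeas.
  - exact: Ameas.
  - move=> w Aw; rewrite -bigcup_mkord.
    case: (pselect (exists i : 'I_n, delta < `|etahat m i w - eta i|)) => [[i hi]|hno].
      by exists (val i) => //=; rewrite FB.
    exfalso.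
    have hle i : `|etahat m i w - eta i| <= delta.
      by rewrite leNgt; apply/negP => h; apply: hno; exists i.
    have gb := @gap_bound _ _ _ _ hM _ _ eta01 (etahat01 m ^~ w) _ _ sstar_opt (shat_opt m w).
    have hS : \sum_(i < n) `|etahat m i w - eta i| <= n%:R * delta.
      apply: (le_trans (ler_sum _ (fun i _ => hle i))).
      by rewrite sumr_const card_ord mulr_natl.
    move: Aw; rewrite /A /= => Aw.
    have : eps < n%:R * delta * C.
      apply: (lt_le_trans Aw); apply: (le_trans gb); rewrite -/C.
      exact: ler_wpM2r.
    rewrite /delta -mulrA mulrCA (mulrC _ C) ltNge => /negP; apply.
    by rewrite mulrAC ler_pdivrMr // ler_pM2l // lerDl.
apply: (@squeeze_cvge _ _ _ _ (fun _ => 0%E) _ (fun m => \sum_(i < n) P (B m i))).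
- by apply: nearW => m; rewrite measure_ge0 bound.
- exact: cvg_cst.
- have h : (fun m => (\sum_(i < n) P (B m i))%E) @ \oo --> (\sum_(i < n) (0 : \bar R))%E.
    apply: cvg_nnesum => i _.
      by apply: nearW => m; apply: measure_ge0.
    exact: etahat_cvg.
  by rewrite big1_eq in h.
Qed.
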